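(* Let $P,Q$ be distinct points of $D$ and let $v_1,v_2\in S^1$ be the endpoints of the chord through $P$ and $Q$, with $v_1$ closer to $P$ than to $Q$. For a point $R\in D$ the following are equivalent: (1) there exists $w\in S^1$ with $w\neq v_1,v_2$ such that $R$ is the intersection point of the line $v_1w_2$ and the line $v_2w_1$, where $w_1\in S^1$ is the intersection point of the line $wP$ with $S^1$ other than $w$, and $w_2\in S^1$ is the intersection point of the line $wQ$ with $S^1$ other than $w$; (2) $\delta(P,Q,R)=\frac{1}{2}\Delta_1'(P,Q)$.
   Context: $D$ is the open unit disk in $\mathbb R^2$ and $S^1$ its boundary circle. Regard $D$ as the Beltrami–Klein model (hyperbolic lines are chords). For distinct $P,Q\in D$ with chord endpoints $v_1,v_2\in S^1$, $d'(P,Q)=\tfrac12\left|\log\frac{|v_1Q||v_2P|}{|v_1P||v_2Q|}\right|$ (Euclidean lengths), $d'(P,P)=0$; $\Delta_n'(P,Q)=\log\frac{e^{n d'(P,Q)}+1}{e^{n d'(P,Q)}-1}$ for $n\in\mathbb Z_{>0}$; $\delta(P,Q,R)=\min\{d'(R,S): S \text{ on the chord through } P,Q\}$. *)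

(* Defs.v *)
From Stdlib Require Import Reals.
Open Scope R_scope.

Definition pt := (R * R)%type.

Definition in_D (P : pt) : Prop := fst P ^ 2 + snd P ^ 2 < 1.
Definition on_S1 (P : pt) : Prop := fst P ^ 2 + snd P ^ 2 = 1.

Definition edist (A B : pt) : R :=
  sqrt ((fst A - fst B) ^ 2 + (snd A - snd B) ^ 2).

Definition collinear (A B C : pt) : Prop :=
  (fst B - fst A) * (snd C - snd A) - (snd B - snd A) * (fst C - fst A) = 0.

(* Endpoints on S^1 of the chord through P <> Q (in D): the points
   P + t (Q - P) with |P + t (Q - P)| = 1, i.e. roots t of
   a t^2 + 2 b t + c = 0; sgn = 1 / sgn = -1 selects the two roots. *)
Definition chord_end (P Q : pt) (sgn : R) : pt :=
  let dx := fst Q - fst P in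
  let dy := snd Q - snd P in
  let a := dx ^ 2 + dy ^ 2 in
  let b := fst P * dx + snd P * dy in
  let c := fst P ^ 2 + snd P ^ 2 - 1 in
  let t := (- b + sgn * sqrt (b ^ 2 - a * c)) / a in
  (fst P + t * dx, snd P + t * dy).

(* Hilbert (Klein model) distance d'(P,Q); the formula is symmetric in
   the two endpoints because of the absolute value. *)
Definition dK (P Q : pt) : R :=
  if Req_EM_T (edist P Q) 0 then 0 else
  let v1 := chord_end P Q 1 in
  let v2 := chord_end P Q (-1) in
  / 2 * Rabs (ln ((edist v1 Q * edist v2 P) / (edist v1 P * edist v2 Q))).

Definition DeltaK (n : nat) (P Q : pt) : R :=
  ln ((exp (INR n * dK P Q) + 1) / (exp (INR n * dK P Q) - 1)).

Definition on_chord (P Q S : pt) : Prop :=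
  in_D S /\ exists t : R, S = (fst P + t * (fst Q - fst P), snd P + t * (snd Q - snd P)).

(* "delta(P,Q,R) = x": x is the minimum of d'(R,S) over S on the chord
   through P and Q (attained and a lower bound). *)
Definition delta_is (P Q R0 : pt) (x : R) : Prop :=
  (exists S, on_chord P Q S /\ dK R0 S = x) /\
  (forall S, on_chord P Q S -> x <= dK R0 S).

(* Main.v *)
Require Import Defs.
From Stdlib Require Import Reals Lra Psatz Nsatz.
Open Scope R_scope.

Definition dot (A B : pt) := fst A * fst B + snd A * snd B.
Definition colE (A B C : pt) := (fst B - fst A) * (snd C - snd A) - (snd B - snd A) * (fst C - fst A).
Definition GG (A B : pt) := (1 - dot A B)^2 / ((1 - dot A A) * (1 - dot B B)).


Lemma edist_line ax ay bx by' t :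
  edist (ax + t*(bx-ax), ay + t*(by'-ay)) (bx,by') = Rabs (t-1) * sqrt ((bx-ax)^2+(by'-ay)^2).
Proof.
  unfold edist; cbn [fst snd].
  replace ((ax + t * (bx - ax) - bx) ^ 2 + (ay + t * (by' - ay) - by') ^ 2)
    with ((t-1)^2 * ((bx-ax)^2+(by'-ay)^2)) by ring.
  rewrite sqrt_mult_alt by apply pow2_ge_0. rewrite <- Rsqr_pow2, sqrt_Rsqr_abs. reflexivity.
Qed.

Lemma edist_line0 ax ay bx by' t :
  edist (ax + t*(bx-ax), ay + t*(by'-ay)) (ax,ay) = Rabs t * sqrt ((bx-ax)^2+(by'-ay)^2).
Proof.
  unfold edist; cbn [fst snd].
  replace ((ax + t * (bx - ax) - ax) ^ 2 + (ay + t * (by' - ay) - ay) ^ 2)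
    with (t^2 * ((bx-ax)^2+(by'-ay)^2)) by ring.
  rewrite sqrt_mult_alt by apply pow2_ge_0. rewrite <- Rsqr_pow2, sqrt_Rsqr_abs. reflexivity.
Qed.

Lemma cr_identity t1 t2 : t1 <> 0 -> 1 - t2 <> 0 -> t1 - 1 <> 0 -> t2 <> 0 ->
  let rho := (t1-1)*(-t2)/(t1*(1-t2)) in
  /rho + rho + 2 = (t1+t2 - 2*(t1*t2))^2 / (-(t1*t2)*((t1+t2) - 1 - t1*t2)).
Proof. intros. unfold rho.
  assert (t1 + t2 - 1 - t1*t2 <> 0).
  { replace (t1 + t2 - 1 - t1*t2) with (((t1-1)*(1-t2))) by ring.
    apply Rmult_integral_contrapositive; auto. }
  field. repeat split; auto.
Qed.

Lemma dK_G A B : in_D A -> in_D B ->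
  1 <= exp (dK A B) /\ (exp (dK A B) + / exp (dK A B))^2 = 4 * GG A B.
Proof.
  destruct A as [ax ay], B as [bx by']. unfold in_D; cbn [fst snd]. intros HA HB.
  unfold dK. destruct (Req_EM_T _ _) as [E|E].
  - unfold edist in E; cbn [fst snd] in E. apply sqrt_eq_0 in E; [|apply Rplus_le_le_0_compat; apply pow2_ge_0].
    rewrite <- !Rsqr_pow2 in E. apply Rplus_sqr_eq_0 in E. destruct E as [E1 E2].
    assert (ax = bx) by lra. assert (ay = by') by lra. subst.
    rewrite exp_0. unfold GG, dot; cbn [fst snd]. split; [lra|].
    field. nra.
  - unfold chord_end. cbn [fst snd]. rewrite !edist_line, !edist_line0.
    set (a := (bx-ax)^2 + (by'-ay)^2) in *.
    set (b := ax*(bx-ax) + ay*(by'-ay)) in *.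
    set (c := ax^2+ay^2-1) in *.
    set (sq := sqrt (b^2 - a*c)) in *.
    set (t1 := (-b + 1*sq)/a). set (t2 := (-b + -1*sq)/a).
    assert (Ha : 0 < a).
    { destruct (Rle_lt_dec a 0) as [h|h]; auto. exfalso.
      pose proof (pow2_ge_0 (bx-ax)); pose proof (pow2_ge_0 (by'-ay)).
      assert (Hz : Rsqr (bx-ax) + Rsqr (by'-ay) = 0) by (rewrite !Rsqr_pow2; unfold a in h; lra).
      apply Rplus_sqr_eq_0 in Hz. destruct Hz as [E1 E2].
      apply E. unfold edist; cbn [fst snd].
      replace ((ax - bx) ^ 2 + (ay - by') ^ 2) with 0 by (replace bx with ax by lra; replace by' with ay by lra; ring).
      apply sqrt_0. }
    assert (Hc : c < 0) by (unfold c; lra).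
    assert (Habc : a + 2*b + c < 0).
    { replace (a + 2*b + c) with (bx^2 + by'^2 - 1) by (unfold a,b,c; ring). lra. }
    assert (Hd : 0 <= b^2 - a*c) by (assert (0 <= b^2) by apply pow2_ge_0; nra).
    assert (Hsq : sq * sq = b^2 - a*c) by (apply sqrt_sqrt; auto).
    assert (Hsq0 : 0 <= sq) by apply sqrt_pos.
    assert (Ht1 : t1 > 1).
    { unfold t1. apply Rlt_gt. apply (Rmult_lt_reg_r a); [lra|].
      field_simplify; [|lra]. nra. }
    assert (Ht2 : t2 < 0).
    { unfold t2. apply (Rmult_lt_reg_r a); [lra|].
      field_simplify; [|lra]. nra. }
    assert (Hs1 : t1 + t2 = -2*b/a) by (unfold t1,t2; field; lra).
    assert (Hs2 : t1 * t2 = c/a).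
    { unfold t1,t2. replace ((-b + 1*sq)/a * ((-b + -1*sq)/a)) with ((b^2 - sq*sq)/(a*a)) by (field; lra).
      rewrite Hsq. field; lra. }
    rewrite (Rabs_right (t1-1)) by lra. rewrite (Rabs_left t2) by lra.
    rewrite (Rabs_right t1) by lra. rewrite (Rabs_left (t2-1)) by lra.
    assert (Hsa : 0 < sqrt a) by (apply sqrt_lt_R0; auto).
    set (rho := (t1-1)*(-t2)/(t1*(1-t2))).
    replace ((t1 - 1) * sqrt a * (- t2 * sqrt a) / (t1 * sqrt a * (- (t2 - 1) * sqrt a)))
      with rho by (unfold rho; field; repeat split; lra).
    assert (Hr0 : 0 < rho).
    { unfold rho. apply Rdiv_lt_0_compat; nra. }
    assert (Hr1 : rho < 1).
    { unfold rho. apply (Rmult_lt_reg_r (t1*(1-t2))); [nra|].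
      field_simplify; nra. }
    assert (Hl : ln rho < 0) by (rewrite <- ln_1; apply ln_increasing; lra).
    rewrite Rabs_left by lra.
    assert (He2 : exp (/2 * - ln rho) * exp (/2 * - ln rho) = / rho).
    { rewrite <- exp_plus. replace (/ 2 * - ln rho + / 2 * - ln rho) with (- ln rho) by field.
      rewrite exp_Ropp, exp_ln; auto. }
    set (e := exp (/2 * - ln rho)) in *.
    assert (He : 1 <= e).
    { unfold e. rewrite <- exp_0. left. apply exp_increasing. lra. }
    split; auto.
    replace ((e + /e)^2) with (e*e + /(e*e) + 2) by (field; lra).
    rewrite He2, Rinv_inv.
    pose proof (cr_identity t1 t2 ltac:(lra) ltac:(lra) ltac:(lra) ltac:(lra)) as Hcr.
    cbv zeta in Hcr. fold rho in Hcr. rewrite Hcr, Hs1, Hs2.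
    unfold GG, dot; cbn [fst snd].
    replace (1 - (ax * bx + ay * by')) with (-(b+c)) by (unfold b,c; ring).
    replace (1 - (ax * ax + ay * ay)) with (-c) by (unfold c; ring).
    replace (1 - (bx * bx + by' * by')) with (-(a+2*b+c)) by (unfold a,b,c; ring).
    field. lra.
Qed.



Section T.
Variables ux uy h s : R.
Hypothesis Hu : ux^2 + uy^2 = 1.
Hypothesis Hs : 0 < s.
Hypothesis Hhs : h^2 + s^2 = 1.

Definition al (X : pt) := ux * fst X + uy * snd X.
Definition be (X : pt) := - uy * fst X + ux * snd X.
Definition DD (X : pt) := 1 - h * be X.
Definition T (X : pt) : pt := (s * al X / DD X, (be X - h) / DD X).
Definition Tinv (Y : pt) : pt :=
  let b := (snd Y + h) / (1 + h * snd Y) in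
  let a := fst Y * s / (1 + h * snd Y) in
  (a * ux - b * uy, a * uy + b * ux).

Lemma dot_ab X Y : dot X Y = al X * al Y + be X * be Y.
Proof. destruct X as [x1 x2], Y as [y1 y2]. unfold dot, al, be; cbn [fst snd].
  pose proof Hu as Hu'. cbn [pow] in Hu'. nsatz. Qed.

Lemma DD_pos X : dot X X <= 1 -> 0 < DD X.
Proof. intros H. rewrite dot_ab in H. unfold DD.
  assert (h^2 < 1) by nra. 
  assert (be X ^2 <= 1) by nra.
  nra. Qed.

Lemma one_minus_dotT X Y : DD X <> 0 -> DD Y <> 0 ->
  1 - dot (T X) (T Y) = s^2 * (1 - dot X Y) / (DD X * DD Y).
Proof. intros HX HY. rewrite (dot_ab X Y). unfold dot, T, DD in *; cbn [fst snd].
  apply (Rmult_eq_reg_r ((1 - h * be X) * (1 - h * be Y))); [|apply Rmult_integral_contrapositive; auto].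
  field_simplify; auto.
  pose proof Hu as Hu'. pose proof Hhs as Hhs'. cbn [pow] in *. nsatz.
Qed.

Lemma GG_T X Y : DD X <> 0 -> DD Y <> 0 -> 1 - dot X X <> 0 -> 1 - dot Y Y <> 0 ->
  GG (T X) (T Y) = GG X Y.
Proof. intros. unfold GG. rewrite !one_minus_dotT by auto. field.
  repeat split; auto; lra. Qed.

Lemma Tinv_T X : DD X <> 0 -> Tinv (T X) = X.
Proof. intros HX. unfold Tinv, T. cbn [fst snd].
  assert (Hk : 1 + h * ((be X - h) / DD X) = s^2 / DD X).
  { replace (s^2) with (1 - h^2) by lra. unfold DD in *. field. auto. }
  rewrite Hk.
  assert (Ha : s * al X / DD X * s / (s ^ 2 / DD X) = al X) by (field; split; lra).
  assert (Hb : ((be X - h) / DD X + h) / (s ^ 2 / DD X) = be X).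
  { replace (s^2) with (1 - h^2) by lra. unfold DD in *. field. split; auto. nra. }
  rewrite Ha, Hb. destruct X as [x1 x2]. unfold al, be; cbn [fst snd].
  pose proof Hu as Hu'. cbn [pow] in Hu'. f_equal; nsatz.
Qed.

Lemma al_comb a b : al (a * ux - b * uy, a * uy + b * ux) = a.
Proof. unfold al; cbn [fst snd]. pose proof Hu as Hu'. cbn [pow] in Hu'. nsatz. Qed.
Lemma be_comb a b : be (a * ux - b * uy, a * uy + b * ux) = b.
Proof. unfold be; cbn [fst snd]. pose proof Hu as Hu'. cbn [pow] in Hu'. nsatz. Qed.

Lemma DD_Tinv Y : 1 + h * snd Y <> 0 -> DD (Tinv Y) = s^2 / (1 + h * snd Y).
Proof. intros H. unfold DD, Tinv. rewrite be_comb. replace (s^2) with (1-h^2) by lra. field; auto. Qed.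

Lemma T_Tinv Y : 1 + h * snd Y <> 0 -> T (Tinv Y) = Y.
Proof. intros H. pose proof (DD_Tinv Y H) as HD. unfold T. rewrite HD.
  unfold Tinv; rewrite al_comb, be_comb. destruct Y as [y1 y2]; cbn [fst snd] in *.
  f_equal. field; split; lra. replace (s^2) with (1-h^2) by lra. field. split; auto. nra.
Qed.

Lemma inD_T X : DD X <> 0 -> (dot X X < 1 <-> dot (T X) (T X) < 1).
Proof. intros H. pose proof (one_minus_dotT X X H H) as E.
  assert (HD2 : 0 < DD X * DD X) by nra. assert (Hs2 : 0 < s^2) by nra.
  split; intros H1.
  - assert (0 < 1 - dot (T X) (T X)); [|lra]. rewrite E. apply Rdiv_lt_0_compat; auto. nra.
  - assert (0 < 1 - dot X X); [|lra]. assert (H2 : 0 < 1 - dot (T X) (T X)) by lra. rewrite E in H2.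
    assert (0 < s ^ 2 * (1 - dot X X)). 
    { apply (Rmult_lt_reg_r (/(DD X * DD X))). apply Rinv_0_lt_compat; auto. 
      rewrite Rmult_0_l. unfold Rdiv in H2. lra. }
    nra.
Qed.

Lemma onS1_T X : DD X <> 0 -> (dot X X = 1 <-> dot (T X) (T X) = 1).
Proof. intros H. pose proof (one_minus_dotT X X H H) as E.
  assert (HD2 : 0 < DD X * DD X) by nra. assert (Hs2 : 0 < s^2) by nra.
  split; intros H1.
  - assert (1 - dot (T X) (T X) = 0); [|lra]. rewrite E, H1. field; auto.
  - assert (1 - dot X X = 0); [|lra]. rewrite H1 in E. replace (1-1) with 0 in E by ring.
    assert (s ^ 2 * (1 - dot X X) = 0).
    { apply (Rmult_eq_reg_r (/(DD X * DD X))). unfold Rdiv in E. rewrite <- E. ring.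
      apply Rinv_neq_0_compat. lra. }
    match goal with Hz : s ^ 2 * _ = 0 |- _ => apply Rmult_integral in Hz; destruct Hz; lra end.
Qed.

Lemma colE_frac xa ya da xb yb db xc yc dc : da <> 0 -> db <> 0 -> dc <> 0 ->
  colE (xa/da, ya/da) (xb/db, yb/db) (xc/dc, yc/dc) * (da*db*dc) =
  da*(xb*yc - yb*xc) - xa*(db*yc - yb*dc) + ya*(db*xc - xb*dc).
Proof. intros. unfold colE; cbn [fst snd]. field. auto. Qed.

Lemma col_T A B C : DD A <> 0 -> DD B <> 0 -> DD C <> 0 ->
  colE (T A) (T B) (T C) = s^3 * colE A B C / (DD A * DD B * DD C).
Proof. intros HA HB HC. 
  apply (Rmult_eq_reg_r (DD A * DD B * DD C)); [|repeat apply Rmult_integral_contrapositive; auto].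
  unfold T. rewrite colE_frac by auto. field_simplify; [|repeat split; auto].
  destruct A as [a1 a2], B as [b1 b2], C as [c1 c2]. unfold colE, DD, al, be in *. cbn [fst snd] in *.
  pose proof Hu as Hu'. pose proof Hhs as Hhs'. cbn [pow] in *. nsatz.
Qed.
End T.


Definition ptt (t : R) : pt := ((1 - t^2)/(1 + t^2), 2*t/(1+t^2)).

Lemma one_t2 t : 0 < 1 + t^2.
Proof. pose proof (pow2_ge_0 t). lra. Qed.

Lemma ptt_circle t : dot (ptt t) (ptt t) = 1.
Proof. unfold dot, ptt; cbn [fst snd]. pose proof (one_t2 t). field. lra. Qed.

Lemma ptt_tau t : snd (ptt t) / (1 + fst (ptt t)) = t.
Proof. unfold ptt; cbn [fst snd]. pose proof (one_t2 t). field. split; lra. Qed.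

Lemma circ_tau a b : a^2 + b^2 = 1 -> a <> -1 -> ptt (b/(1+a)) = (a,b).
Proof. intros H Ha. unfold ptt.
  assert (1 + a <> 0) by lra.
  assert (E : 1 + (b/(1+a))^2 = 2/(1+a)).
  { replace ((b/(1+a))^2) with (b^2/(1+a)^2) by (field; auto). replace (b^2) with (1-a^2) by lra.
    field; auto. }
  rewrite E. f_equal.
  - replace ((b/(1+a))^2) with (b^2/(1+a)^2) by (field; auto). replace (b^2) with (1-a^2) by lra.
    field; auto.
  - field; auto.
Qed.

Lemma col_ptt p t t1 : colE (ptt t) (p,0) (ptt t1) =
  2*(t1-t)*(p*(1-t*t1) - (1+t*t1)) / ((1+t^2)*(1+t1^2)).
Proof. unfold colE, ptt; cbn [fst snd]. pose proof (one_t2 t). pose proof (one_t2 t1).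
  field. split; lra. Qed.

Lemma sq0 x : x^2 = 0 -> x = 0.
Proof. intros H. assert (x*x = 0) by (rewrite <- H; ring). apply Rmult_integral in H0. tauto. Qed.

Lemma not_m1 a b : a^2 + b^2 = 1 -> b <> 0 -> a <> -1.
Proof. intros H Hb Ha. subst. apply Hb. apply sq0. lra. Qed.

Lemma b_nz a b : a^2 + b^2 = 1 -> (a,b) <> (-1,0) -> (a,b) <> (1,0) -> b <> 0.
Proof. intros H H1 H2 Hb. subst. assert ((a-1)*(a+1) = 0) by lra.
  apply Rmult_integral in H0. destruct H0; [apply H2|apply H1]; f_equal; lra. Qed.

Lemma ptt_inj t t1 : ptt t = ptt t1 -> t = t1.
Proof. intros H. rewrite <- (ptt_tau t), <- (ptt_tau t1), H. reflexivity. Qed.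

Lemma second_pt_nm1 p a b a1 b1 : -1 < p < 1 -> b <> 0 -> a1^2 + b1^2 = 1 ->
  colE (a,b) (p,0) (a1,b1) = 0 -> a1 <> -1.
Proof. intros Hp Hb H1 Hc Ha1. subst. assert (b1 = 0) by (apply sq0; lra). subst.
  unfold colE in Hc; cbn [fst snd] in Hc. apply Hb.
  assert (b * (p+1) = 0) by lra. apply Rmult_integral in H. destruct H; lra. Qed.

Lemma inv_rel p a b a1 b1 : -1 < p < 1 -> a^2 + b^2 = 1 -> b <> 0 -> a1^2 + b1^2 = 1 ->
  (a1,b1) <> (a,b) -> colE (a,b) (p,0) (a1,b1) = 0 ->
  (b/(1+a)) * (b1/(1+a1)) * (1+p) = p - 1.
Proof. intros Hp H Hb H1 Hne Hc.
  assert (Ha : a <> -1) by (apply (not_m1 a b); auto).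
  assert (Ha1 : a1 <> -1) by (apply (second_pt_nm1 p a b a1 b1); auto).
  rewrite <- (circ_tau a b) in Hc, Hne by auto. rewrite <- (circ_tau a1 b1) in Hc, Hne by auto.
  set (t := b/(1+a)) in *. set (t1 := b1/(1+a1)) in *.
  rewrite col_ptt in Hc. pose proof (one_t2 t). pose proof (one_t2 t1).
  assert (Hn : 2 * (t1 - t) * (p * (1 - t * t1) - (1 + t * t1)) = 0).
  { apply (Rmult_eq_reg_r (/((1 + t ^ 2) * (1 + t1 ^ 2)))). unfold Rdiv in Hc. lra.
    apply Rinv_neq_0_compat. nra. }
  apply Rmult_integral in Hn. destruct Hn as [Hn|Hn].
  - exfalso. apply Hne. f_equal. lra.
  - lra.
Qed.

Lemma fwd p q a b a1 b1 a2 b2 X Y :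
 -1<p<1 -> -1<q<1 -> a^2+b^2=1 -> (a,b)<>(-1,0) -> (a,b)<>(1,0) ->
 a1^2+b1^2=1 -> (a1,b1)<>(a,b) -> colE (a,b) (p,0) (a1,b1) = 0 ->
 a2^2+b2^2=1 -> (a2,b2)<>(a,b) -> colE (a,b) (q,0) (a2,b2) = 0 ->
 colE (-1,0) (a2,b2) (X,Y) = 0 -> colE (1,0) (a1,b1) (X,Y) = 0 ->
 (1-p)*(1+q)*Y^2 = (1-q)*(1+p)*(1-X^2).
Proof. intros Hp Hq H Hn1 Hn2 H1 Hne1 Hc1 H2 Hne2 Hc2 L1 L2.
  assert (Hb : b <> 0) by (apply (b_nz a b); auto).
  assert (Ha1 : a1 <> -1) by (apply (second_pt_nm1 p a b a1 b1); auto).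
  assert (Ha2 : a2 <> -1) by (apply (second_pt_nm1 q a b a2 b2); auto).
  pose proof (inv_rel p a b a1 b1 Hp H Hb H1 Hne1 Hc1) as R1.
  pose proof (inv_rel q a b a2 b2 Hq H Hb H2 Hne2 Hc2) as R2.
  set (t := b/(1+a)) in *. set (t1 := b1/(1+a1)) in *. set (t2 := b2/(1+a2)) in *.
  assert (E1 : b1 = t1 * (1+a1)) by (unfold t1; field; lra).
  assert (E2 : b2 = t2 * (1+a2)) by (unfold t2; field; lra).
  assert (F1 : a1 - 1 = - t1^2 * (1+a1)).
  { unfold t1. replace (-(b1/(1+a1))^2*(1+a1)) with (-(b1^2)/(1+a1)) by (field; lra).
    replace (b1^2) with (1 - a1^2) by lra. field. lra. }
  unfold colE in L1, L2; cbn [fst snd] in L1, L2.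
  assert (Y1 : Y = t2 * (X+1)).
  { rewrite E2 in L1. assert ((1+a2) * (Y - t2*(X+1)) = 0) by (rewrite <- L1; ring).
    apply Rmult_integral in H0. destruct H0; lra. }
  assert (Ht1 : t1 <> 0) by (intro Z; rewrite Z in R1; lra).
  assert (Y2 : t1 * Y = 1 - X).
  { rewrite E1, F1 in L2. assert (H0 : (1+a1) * t1 * (t1*Y - (1 - X)) = 0).
    { match type of L2 with ?l = 0 => transitivity (-l); [ring|rewrite L2; ring] end. }
    apply Rmult_integral in H0. destruct H0 as [H0|H0]; [apply Rmult_integral in H0; destruct H0; lra| lra]. }
  clearbody t t1 t2. cbn [pow] in *. nsatz.
Qed.

Lemma ptt_ne_m1 t : ptt t <> (-1,0).
Proof. intro E. pose proof (f_equal fst E) as E1. pose proof (f_equal snd E) as E2. unfold ptt in E1, E2; cbn [fst snd] in E1, E2. pose proof (one_t2 t).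
  assert (1 - t^2 = -(1+t^2)) by (apply (Rmult_eq_reg_r (/(1+t^2))); [unfold Rdiv in E1; rewrite E1; field; lra|apply Rinv_neq_0_compat; lra]).
  lra. Qed.

Lemma ptt_ne_1 t : t <> 0 -> ptt t <> (1,0).
Proof. intros Ht E. pose proof (f_equal fst E) as E1. pose proof (f_equal snd E) as E2. unfold ptt in E1, E2; cbn [fst snd] in E1, E2. pose proof (one_t2 t).
  assert (2*t = 0) by (apply (Rmult_eq_reg_r (/(1+t^2))); [unfold Rdiv in E2; rewrite E2; ring|apply Rinv_neq_0_compat; lra]).
  lra. Qed.

Lemma col_left t2 X Y : colE (-1,0) (ptt t2) (X,Y) = 2*(Y - t2*(X+1))/(1+t2^2).
Proof. unfold colE, ptt; cbn [fst snd]. pose proof (one_t2 t2). field. lra. Qed.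

Lemma col_right t1 X Y : colE (1,0) (ptt t1) (X,Y) = -2*t1*(t1*Y + X - 1)/(1+t1^2).
Proof. unfold colE, ptt; cbn [fst snd]. pose proof (one_t2 t1). field. lra. Qed.

Lemma bwd p q X Y : -1<p<1 -> -1<q<1 -> X^2+Y^2<1 -> (1-p)*(1+q)*Y^2 = (1-q)*(1+p)*(1-X^2) ->
 exists W W1 W2 : pt, dot W W = 1 /\ W <> (-1,0) /\ W <> (1,0) /\
   dot W1 W1 = 1 /\ W1 <> W /\ colE W (p,0) W1 = 0 /\
   dot W2 W2 = 1 /\ W2 <> W /\ colE W (q,0) W2 = 0 /\
   colE (-1,0) W2 (X,Y) = 0 /\ colE (1,0) W1 (X,Y) = 0.
Proof. intros Hp Hq HD HE.
  assert (HX : X^2 < 1) by (pose proof (pow2_ge_0 Y); lra).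
  assert (HX1 : X < 1) by nra. assert (HX2 : -1 < X) by nra.
  assert (HY : Y <> 0).
  { intro Z. subst. assert (0 < (1-q)*(1+p)*(1-X^2)). 
    { apply Rmult_lt_0_compat; [apply Rmult_lt_0_compat|]; lra. }
    cbn [pow] in HE. nra. }
  set (t1 := (1-X)/Y).
  assert (Ht1 : t1 <> 0) by (unfold t1; intro Z; apply Rmult_integral in Z; destruct Z as [Z|Z];
     [lra | apply Rinv_neq_0_compat in HY; contradiction]).
  set (t := -(1-p)/((1+p)*t1)).
  assert (Ht : t <> 0).
  { unfold t. intro Z. apply Rmult_integral in Z. destruct Z as [Z|Z]. lra.
    revert Z. apply Rinv_neq_0_compat. apply Rmult_integral_contrapositive. split; lra. }
  set (t2 := -(1-q)/((1+q)*t)).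
  assert (R1 : t*t1*(1+p) = p-1) by (unfold t; field; split; lra).
  assert (R2 : t*t2*(1+q) = q-1) by (unfold t2; field; split; lra).
  assert (Y1 : t1 * Y = 1 - X) by (unfold t1; field; auto).
  assert (Y2 : Y = t2 * (X+1)).
  { assert (Ht2 : t2 = (1-q)*(1+p)*(1-X)/((1+q)*(1-p)*Y)).
    { unfold t2, t, t1. field. repeat split; try lra; auto. }
    rewrite Ht2. apply (Rmult_eq_reg_r ((1+q)*(1-p)*Y)).
    2:{ repeat (apply Rmult_integral_contrapositive; split); try lra; auto. }
    field_simplify; [|repeat split; try lra; auto].
    transitivity ((1 - p) * (1 + q) * Y ^ 2); [ring|rewrite HE; ring]. }
  exists (ptt t), (ptt t1), (ptt t2).
  pose proof (one_t2 t). pose proof (one_t2 t1). pose proof (one_t2 t2).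
  repeat split.
  - apply ptt_circle.
  - apply ptt_ne_m1.
  - apply ptt_ne_1; auto.
  - apply ptt_circle.
  - intro E. apply ptt_inj in E. rewrite E in R1. assert (0 <= t*t) by nra. nra.
  - rewrite col_ptt. replace (p * (1 - t * t1) - (1 + t * t1)) with 0 by lra. field. split; lra.
  - apply ptt_circle.
  - intro E. apply ptt_inj in E. rewrite E in R2. assert (0 <= t*t) by nra. nra.
  - rewrite col_ptt. replace (q * (1 - t * t2) - (1 + t * t2)) with 0 by lra. field. split; lra.
  - rewrite col_left. replace (Y - t2 * (X+1)) with 0 by lra. field. lra.
  - rewrite col_right. replace (t1 * Y + X - 1) with 0 by lra. field. lra.
Qed.



Definition phi (z : R) := (z + /z)^2.

Lemma hz_lt f g : 1 <= g -> g < f -> g + /g < f + /f.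
Proof. intros Hg Hf.
  assert (f + /f - (g + /g) = (f-g)*(f*g-1)/(f*g)) by (field; split; lra).
  assert (0 < (f-g)*(f*g-1)/(f*g)). 
  { apply Rdiv_lt_0_compat; [apply Rmult_lt_0_compat|]; nra. }
  lra. Qed.

Lemma phi_lt f g : 1 <= g -> g < f -> phi g < phi f.
Proof. intros Hg Hf. unfold phi. pose proof (hz_lt f g Hg Hf).
  assert (0 < g + /g). { assert (0 < /g) by (apply Rinv_0_lt_compat; lra). lra. }
  nra. Qed.

Lemma phi_le_iff f g : 1 <= f -> 1 <= g -> (f <= g <-> phi f <= phi g).
Proof. intros Hf Hg. split; intros H.
  - destruct (Req_dec f g). subst; lra. left. apply phi_lt; lra.
  - destruct (Rle_lt_dec f g); auto. pose proof (phi_lt f g Hg r). lra.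
Qed.

Lemma phi_eq_iff f g : 1 <= f -> 1 <= g -> (f = g <-> phi f = phi g).
Proof. intros Hf Hg. split; intros H. subst; auto.
  destruct (Rtotal_order f g) as [Hl|[He|Hl]]; auto.
  - pose proof (phi_lt g f Hf Hl). lra.
  - pose proof (phi_lt f g Hg Hl). lra.
Qed.

Lemma GG_foot X Y sg : X^2 + Y^2 < 1 -> sg^2 < 1 ->
  GG (X,Y) (X,0) = (1-X^2)/(1-X^2-Y^2) /\ GG (X,Y) (X,0) <= GG (X,Y) (sg,0).
Proof. intros H Hs. unfold GG, dot; cbn [fst snd].
  assert (HX : X^2 < 1) by (pose proof (pow2_ge_0 Y); lra).
  split. field. split; lra.
  assert (0 < 1 - (X*X+Y*Y)) by (cbn [pow] in H; lra).
  apply Rmult_le_reg_r with (1 - (X*X+Y*Y)); auto.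
  replace ((1 - (X * X + Y * 0)) ^ 2 / ((1 - (X * X + Y * Y)) * (1 - (X * X + 0 * 0))) * (1 - (X * X + Y * Y)))
    with (1 - X^2) by (field; split; cbn [pow] in *; lra).
  replace ((1 - (X * sg + Y * 0)) ^ 2 / ((1 - (X * X + Y * Y)) * (1 - (sg * sg + 0 * 0))) * (1 - (X * X + Y * Y)))
    with ((1 - X*sg)^2/(1-sg^2)) by (field; split; cbn [pow] in *; lra).
  apply Rmult_le_reg_r with (1 - sg^2); [lra|].
  replace ((1 - X*sg)^2/(1-sg^2) * (1-sg^2)) with ((1 - X*sg)^2) by (field; lra).
  pose proof (pow2_ge_0 (X - sg)). cbn [pow] in *. nra.
Qed.

Lemma ed_E p q e : -1 < p -> p < q -> q < 1 -> 1 <= e -> (e + /e)^2 = 4 * GG (p,0) (q,0) ->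
  e^2 = (1+q)*(1-p)/((1-q)*(1+p)).
Proof. intros H1 H2 H3 He H. unfold GG, dot in H; cbn [fst snd] in H.
  set (E := (1+q)*(1-p)/((1-q)*(1+p))).
  assert (HE1 : 1 < E).
  { unfold E. apply (Rmult_lt_reg_r ((1-q)*(1+p))). nra. field_simplify; nra. }
  assert (HG : e^2 + /e^2 = E + /E).
  { replace (e^2 + /e^2) with ((e + /e)^2 - 2) by (field; lra). rewrite H. unfold E.
    field. repeat split; nra. }
  assert (F : (e^2 - E) * (e^2*E - 1) = 0).
  { apply (Rmult_eq_reg_r (/(e^2*E))). 2:{ apply Rinv_neq_0_compat. nra. }
    rewrite Rmult_0_l. replace ((e ^ 2 - E) * (e ^ 2 * E - 1) * / (e ^ 2 * E)) with
      (e^2 + /e^2 - (E + /E)) by (field; split; nra). lra. }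
  apply Rmult_integral in F. destruct F as [F|F]. lra. 
  assert (1 <= e^2) by nra. nra.
Qed.


Lemma f_phi e : 1 < e -> 1 <= exp (/2 * ln ((e+1)/(e-1))) /\
   phi (exp (/2 * ln ((e+1)/(e-1)))) = 4 * e^2/(e^2-1).
Proof. intros He. set (r := (e+1)/(e-1)).
  assert (Hr : 1 < r).
  { unfold r. apply (Rmult_lt_reg_r (e-1)); [lra|]. field_simplify; lra. }
  assert (Hl : 0 < ln r) by (rewrite <- ln_1; apply ln_increasing; lra).
  set (f := exp (/2 * ln r)).
  assert (Hf : f * f = r).
  { unfold f. rewrite <- exp_plus. replace (/2 * ln r + /2 * ln r) with (ln r) by field.
    apply exp_ln. lra. }
  assert (Hf1 : 1 <= f). { unfold f. rewrite <- exp_0. left. apply exp_increasing. lra. }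
  split; auto. unfold phi.
  replace ((f + /f)^2) with (f*f + /(f*f) + 2) by (field; lra).
  rewrite Hf. unfold r. field. repeat split; intro; nra.
Qed.

Lemma exp_le_iff x y : x <= y <-> exp x <= exp y.
Proof. split; intros H.
  - destruct H. left; apply exp_increasing; auto. subst; lra.
  - destruct (Rle_lt_dec x y); auto. pose proof (exp_increasing y x r). lra.
Qed.

Lemma inD_dot X : in_D X <-> dot X X < 1.
Proof. unfold in_D, dot. replace (fst X ^ 2 + snd X ^ 2) with (fst X * fst X + snd X * snd X) by ring. tauto. Qed.

Lemma onS1_dot X : on_S1 X <-> dot X X = 1.
Proof. unfold on_S1, dot. replace (fst X ^ 2 + snd X ^ 2) with (fst X * fst X + snd X * snd X) by ring. tauto. Qed.

Lemma dist2_ab ux uy A B : ux^2 + uy^2 = 1 ->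
  (fst A - fst B)^2 + (snd A - snd B)^2 = (al ux uy A - al ux uy B)^2 + (be ux uy A - be ux uy B)^2.
Proof. intros Hu. destruct A as [a1 a2], B as [b1 b2]. unfold al, be; cbn [fst snd].
  cbn [pow] in *. nsatz. Qed.

Lemma recon ux uy X : ux^2 + uy^2 = 1 ->
  X = (al ux uy X * ux - be ux uy X * uy, al ux uy X * uy + be ux uy X * ux).
Proof. intros Hu. destruct X as [x1 x2]. unfold al, be; cbn [fst snd].
  cbn [pow] in *. f_equal; nsatz. Qed.

Lemma setup v1 v2 : on_S1 v1 -> on_S1 v2 -> v1 <> v2 ->
  exists ux uy h s, ux^2+uy^2=1 /\ 0<s /\ h^2+s^2=1 /\
    al ux uy v1 = -s /\ al ux uy v2 = s /\ be ux uy v1 = h /\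
    (forall X, colE v1 v2 X = 0 -> be ux uy X = h).
Proof. intros H1 H2 Hne. destruct v1 as [a1 a2], v2 as [b1 b2].
  unfold on_S1 in *; cbn [fst snd] in *.
  set (d2 := (b1-a1)^2 + (b2-a2)^2).
  assert (Hd : 0 < d2).
  { pose proof (pow2_ge_0 (b1-a1)). pose proof (pow2_ge_0 (b2-a2)).
    destruct (Rle_lt_dec d2 0); auto. exfalso. apply Hne.
    assert (Hz : Rsqr (b1-a1) + Rsqr (b2-a2) = 0) by (rewrite !Rsqr_pow2; unfold d2 in *; lra).
    apply Rplus_sqr_eq_0 in Hz. destruct Hz. f_equal; lra. }
  set (s := sqrt d2 / 2).
  assert (Hs : 0 < s) by (unfold s; pose proof (sqrt_lt_R0 d2 Hd); lra).
  assert (Hs2 : 4 * s^2 = d2).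
  { unfold s. replace (4 * (sqrt d2 / 2)^2) with (sqrt d2 * sqrt d2) by field. apply sqrt_sqrt; lra. }
  set (ux := (b1-a1)/(2*s)). set (uy := (b2-a2)/(2*s)).
  assert (Hu : ux^2 + uy^2 = 1).
  { unfold ux, uy. replace (((b1-a1)/(2*s))^2) with ((b1-a1)^2/(4*s^2)) by (field; lra).
    replace (((b2-a2)/(2*s))^2) with ((b2-a2)^2/(4*s^2)) by (field; lra).
    rewrite Hs2. unfold d2. field. fold d2. lra. }
  assert (Hal1 : al ux uy (a1,a2) = -s).
  { unfold al, ux, uy; cbn [fst snd]. apply (Rmult_eq_reg_r (2*s)); [|lra].
    field_simplify; [|lra]. 
    assert (E : 4*s^2 = (b1-a1)^2 + (b2-a2)^2) by (rewrite Hs2; reflexivity).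
    clearbody ux uy s d2. cbn [pow] in *. lra. }
  assert (Hal2 : al ux uy (b1,b2) = s).
  { unfold al, ux, uy; cbn [fst snd]. apply (Rmult_eq_reg_r (2*s)); [|lra].
    field_simplify; [|lra]. 
    assert (E : 4*s^2 = (b1-a1)^2 + (b2-a2)^2) by (rewrite Hs2; reflexivity).
    clearbody ux uy s d2. cbn [pow] in *. lra. }
  exists ux, uy, (be ux uy (a1,a2)), s. repeat split; auto.
  - pose proof (dist2_ab ux uy (a1,a2) (0,0) Hu) as E. cbn [fst snd] in E. rewrite Hal1 in E.
    replace (al ux uy (0, 0)) with 0 in E by (unfold al; cbn [fst snd]; ring).
    replace (be ux uy (0, 0)) with 0 in E by (unfold be; cbn [fst snd]; ring).
    clearbody ux uy s d2. set (hh := be ux uy (a1,a2)) in *. clearbody hh. cbn [pow] in *. lra.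
  - intros X HX. unfold colE in HX; cbn [fst snd] in HX. unfold be, ux, uy; cbn [fst snd].
    destruct X as [x1 x2]; cbn [fst snd] in *. apply Rminus_diag_uniq.
    match goal with |- ?l = 0 => replace l with (((b1 - a1) * (x2 - a2) - (b2 - a2) * (x1 - a1))/(2*s)) by (field; lra) end.
    rewrite HX. field. lra.
Qed.

Lemma col_iff ux uy h s A B C : ux^2 + uy^2 = 1 -> h^2 + s^2 = 1 -> 0 < s ->
  DD ux uy h A <> 0 -> DD ux uy h B <> 0 -> DD ux uy h C <> 0 ->
  (colE (T ux uy h s A) (T ux uy h s B) (T ux uy h s C) = 0 <-> colE A B C = 0).
Proof. intros Hu Hhs Hs HA HB HC. rewrite (col_T ux uy h s Hu Hhs A B C HA HB HC).
  split; intro H.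
  - unfold Rdiv in H. apply Rmult_integral in H. destruct H as [H|H].
    + apply Rmult_integral in H. destruct H as [H|H]; auto. exfalso. 
      assert (0 < s^3) by (apply pow_lt; auto). lra.
    + exfalso. revert H. apply Rinv_neq_0_compat. repeat (apply Rmult_integral_contrapositive; split); auto.
  - rewrite H. unfold Rdiv. ring.
Qed.

Lemma T_inj ux uy h s A B : ux^2 + uy^2 = 1 -> 0 < s -> h^2 + s^2 = 1 ->
  DD ux uy h A <> 0 -> DD ux uy h B <> 0 -> T ux uy h s A = T ux uy h s B -> A = B.
Proof. intros Hu Hs Hhs HA HB E.
  rewrite <- (Tinv_T ux uy h s Hu Hs Hhs A HA), <- (Tinv_T ux uy h s Hu Hs Hhs B HB), E. reflexivity. Qed.

Lemma frac_eq A B C D : B <> 0 -> D <> 0 -> (A/B = C/D <-> A*D = C*B).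
Proof. intros HB HD. split; intro H.
  - apply (Rmult_eq_reg_r (/B * /D)). 2:{ apply Rmult_integral_contrapositive; split; apply Rinv_neq_0_compat; auto. }
    replace (A * D * (/B * /D)) with (A/B) by (field; auto).
    replace (C * B * (/B * /D)) with (C/D) by (field; auto). auto.
  - apply (Rmult_eq_reg_r (B * D)). 2:{ apply Rmult_integral_contrapositive; split; auto. }
    replace (A / B * (B * D)) with (A*D) by (field; auto).
    replace (C / D * (B * D)) with (C*B) by (field; auto). auto.
Qed.

Lemma ellK p q X Y : -1<p -> p<q -> q<1 -> X^2+Y^2<1 ->
 ((1-X^2)/(1-X^2-Y^2) = ((1+q)*(1-p)/((1-q)*(1+p))) / ((1+q)*(1-p)/((1-q)*(1+p)) - 1)
   <-> (1-p)*(1+q)*Y^2 = (1-q)*(1+p)*(1-X^2)).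
Proof. intros H1 H2 H3 H.
  replace (((1+q)*(1-p)/((1-q)*(1+p))) / ((1+q)*(1-p)/((1-q)*(1+p)) - 1))
    with ((1+q)*(1-p)/(2*(q-p))) by (field; repeat split; try lra; intro; nra).
  rewrite frac_eq by (try lra; intro; nra).
  assert (K : (1 - X ^ 2) * (2 * (q - p)) - (1 + q) * (1 - p) * (1 - X ^ 2 - Y ^ 2) =
     (1-p)*(1+q)*Y^2 - (1-q)*(1+p)*(1-X^2)) by ring.
  split; intro; lra.
Qed.

Theorem lemma4p2 (P Q v1 v2 R0 : pt) :
  in_D P -> in_D Q -> P <> Q ->
  on_S1 v1 -> on_S1 v2 -> v1 <> v2 ->
  collinear v1 v2 P -> collinear v1 v2 Q ->
  edist v1 P < edist v1 Q ->
  in_D R0 ->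
  ((exists w w1 w2 : pt,
      on_S1 w /\ w <> v1 /\ w <> v2 /\
      on_S1 w1 /\ w1 <> w /\ collinear w P w1 /\
      on_S1 w2 /\ w2 <> w /\ collinear w Q w2 /\
      collinear v1 w2 R0 /\ collinear v2 w1 R0)
   <-> delta_is P Q R0 (/ 2 * DeltaK 1 P Q)).
Proof.
  intros HP HQ HPQ Hv1 Hv2 Hv12 Hc1 Hc2 Hd HR.
  destruct (setup v1 v2 Hv1 Hv2 Hv12) as (ux & uy & h & s & Hu & Hs & Hhs & Hal1 & Hal2 & Hbe1 & Hcol).
  pose proof (DD_pos ux uy h s Hu Hs Hhs) as DDp.
  assert (DDn : forall X, dot X X <= 1 -> DD ux uy h X <> 0) by (intros X HX; specialize (DDp X HX); lra).
  change (colE v1 v2 P = 0) in Hc1. change (colE v1 v2 Q = 0) in Hc2.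
  assert (HbP : be ux uy P = h) by (apply Hcol; exact Hc1).
  assert (HbQ : be ux uy Q = h) by (apply Hcol; exact Hc2).
  assert (Hbv2 : be ux uy v2 = h) by (apply Hcol; unfold colE; ring).
  assert (Hh2 : 1 - h * h = s^2) by (cbn [pow] in *; lra).
  assert (Tline : forall Z, be ux uy Z = h -> T ux uy h s Z = (al ux uy Z / s, 0)).
  { intros Z HZ. unfold T, DD. rewrite HZ, Hh2. f_equal; field; lra. }
  assert (Tv1 : T ux uy h s v1 = (-1, 0)) by (rewrite Tline, Hal1 by auto; f_equal; field; lra).
  assert (Tv2 : T ux uy h s v2 = (1, 0)) by (rewrite Tline, Hal2 by auto; f_equal; field; lra).
  apply inD_dot in HP, HQ, HR.
  apply onS1_dot in Hv1, Hv2.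
  assert (DP : DD ux uy h P <> 0) by (apply DDn; lra).
  assert (DQ : DD ux uy h Q <> 0) by (apply DDn; lra).
  assert (DR : DD ux uy h R0 <> 0) by (apply DDn; lra).
  assert (Dv1 : DD ux uy h v1 <> 0) by (apply DDn; lra).
  assert (Dv2 : DD ux uy h v2 <> 0) by (apply DDn; lra).
  set (p := al ux uy P / s). set (q := al ux uy Q / s).
  assert (TP : T ux uy h s P = (p, 0)) by (apply Tline; auto).
  assert (TQ : T ux uy h s Q = (q, 0)) by (apply Tline; auto).
  assert (Hp : -1 < p < 1).
  { pose proof (proj1 (inD_T ux uy h s Hu Hs Hhs P DP) HP) as H. rewrite TP in H.
    unfold dot in H; cbn [fst snd] in H. split; nra. }
  assert (Hq : -1 < q < 1).
  { pose proof (proj1 (inD_T ux uy h s Hu Hs Hhs Q DQ) HQ) as H. rewrite TQ in H.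
    unfold dot in H; cbn [fst snd] in H. split; nra. }
  assert (Hpq : p < q).
  { unfold edist in Hd. rewrite !(dist2_ab ux uy v1 _ Hu) in Hd.
    rewrite Hal1, Hbe1, HbP, HbQ in Hd. apply sqrt_lt_0_alt in Hd.
    assert (EP : al ux uy P = p * s) by (unfold p; field; lra).
    assert (EQ : al ux uy Q = q * s) by (unfold q; field; lra).
    rewrite EP, EQ in Hd. 
    assert (0 < s * (1+p)) by (apply Rmult_lt_0_compat; lra).
    assert (0 < s * (1+q)) by (apply Rmult_lt_0_compat; lra).
    replace ((-s - p*s)^2 + (h-h)^2) with ((s*(1+p))^2) in Hd by ring.
    replace ((-s - q*s)^2 + (h-h)^2) with ((s*(1+q))^2) in Hd by ring.
    assert (s*(1+p) < s*(1+q)) by nra. nra. }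
  destruct (T ux uy h s R0) as [X Y] eqn:HTR.
  assert (HXY : X^2 + Y^2 < 1).
  { pose proof (proj1 (inD_T ux uy h s Hu Hs Hhs R0 DR) HR) as H. rewrite HTR in H.
    unfold dot in H; cbn [fst snd] in H. cbn [pow]. lra. }
  set (Ell := (1-p)*(1+q)*Y^2 = (1-q)*(1+p)*(1-X^2)).
  assert (A1 : (exists w w1 w2 : pt,
      on_S1 w /\ w <> v1 /\ w <> v2 /\
      on_S1 w1 /\ w1 <> w /\ collinear w P w1 /\
      on_S1 w2 /\ w2 <> w /\ collinear w Q w2 /\
      collinear v1 w2 R0 /\ collinear v2 w1 R0) <-> Ell).
  { split.
    - intros (w & w1 & w2 & Hw & Hwv1 & Hwv2 & Hw1 & Hw1w & Hcw1 & Hw2 & Hw2w & Hcw2 & HL1 & HL2).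
      apply onS1_dot in Hw, Hw1, Hw2.
      assert (Dw : DD ux uy h w <> 0) by (apply DDn; lra).
      assert (Dw1 : DD ux uy h w1 <> 0) by (apply DDn; lra).
      assert (Dw2 : DD ux uy h w2 <> 0) by (apply DDn; lra).
      change (colE w P w1 = 0) in Hcw1. change (colE w Q w2 = 0) in Hcw2.
      change (colE v1 w2 R0 = 0) in HL1. change (colE v2 w1 R0 = 0) in HL2.
      apply (col_iff ux uy h s w P w1 Hu Hhs Hs Dw DP Dw1) in Hcw1.
      apply (col_iff ux uy h s w Q w2 Hu Hhs Hs Dw DQ Dw2) in Hcw2.
      apply (col_iff ux uy h s v1 w2 R0 Hu Hhs Hs Dv1 Dw2 DR) in HL1.
      apply (col_iff ux uy h s v2 w1 R0 Hu Hhs Hs Dv2 Dw1 DR) in HL2.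
      assert (Nw1 : T ux uy h s w1 <> T ux uy h s w) by (intro E; apply Hw1w; apply (T_inj ux uy h s); auto).
      assert (Nw2 : T ux uy h s w2 <> T ux uy h s w) by (intro E; apply Hw2w; apply (T_inj ux uy h s); auto).
      assert (Nv1 : T ux uy h s w <> T ux uy h s v1) by (intro E; apply Hwv1; apply (T_inj ux uy h s); auto).
      assert (Nv2 : T ux uy h s w <> T ux uy h s v2) by (intro E; apply Hwv2; apply (T_inj ux uy h s); auto).
      apply (onS1_T ux uy h s Hu Hs Hhs w Dw) in Hw.
      apply (onS1_T ux uy h s Hu Hs Hhs w1 Dw1) in Hw1.
      apply (onS1_T ux uy h s Hu Hs Hhs w2 Dw2) in Hw2.
      rewrite TP in Hcw1. rewrite TQ in Hcw2. rewrite Tv1, HTR in HL1. rewrite Tv2, HTR in HL2.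
      rewrite Tv1 in Nv1. rewrite Tv2 in Nv2.
      destruct (T ux uy h s w) as [a b]. destruct (T ux uy h s w1) as [a1 b1].
      destruct (T ux uy h s w2) as [a2 b2].
      unfold dot in Hw, Hw1, Hw2; cbn [fst snd] in Hw, Hw1, Hw2.
      unfold Ell. apply (fwd p q a b a1 b1 a2 b2 X Y); auto; cbn [pow]; lra.
    - intros HE.
      destruct (bwd p q X Y Hp Hq HXY HE) as (W & W1 & W2 & HW & HWm & HWp & HW1 & HW1W & HcW1 & HW2 & HW2W & HcW2 & HL1 & HL2).
      assert (Hh1 : h*h < 1) by (cbn [pow] in *; nra).
      assert (Hden : forall Z, dot Z Z = 1 -> 1 + h * snd Z <> 0).
      { intros Z HZ. unfold dot in HZ. destruct Z as [z1 z2]; cbn [fst snd] in *.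
        assert (z2*z2 <= 1) by nra. assert ((h*z2)*(h*z2) < 1) by nra. nra. }
      assert (Dinv : forall Z, dot Z Z = 1 -> DD ux uy h (Tinv ux uy h s Z) <> 0).
      { intros Z HZ. rewrite (DD_Tinv ux uy h s Hu Hhs Z (Hden Z HZ)).
        assert (0 < 1 + h * snd Z).
        { unfold dot in HZ. destruct Z as [z1 z2]; cbn [fst snd] in *.
          assert (z2*z2 <= 1) by nra. assert ((h*z2)*(h*z2) < 1) by nra. nra. }
        apply Rgt_not_eq. apply Rdiv_lt_0_compat; auto. nra. }
      pose proof (T_Tinv ux uy h s Hu Hs Hhs W (Hden W HW)) as TW.
      pose proof (T_Tinv ux uy h s Hu Hs Hhs W1 (Hden W1 HW1)) as TW1.
      pose proof (T_Tinv ux uy h s Hu Hs Hhs W2 (Hden W2 HW2)) as TW2.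
      pose proof (Dinv W HW) as Dw. pose proof (Dinv W1 HW1) as Dw1. pose proof (Dinv W2 HW2) as Dw2.
      set (w := Tinv ux uy h s W) in *. set (w1 := Tinv ux uy h s W1) in *. set (w2 := Tinv ux uy h s W2) in *.
      clearbody w w1 w2.
      exists w, w1, w2.
      repeat split.
      + apply onS1_dot. apply (onS1_T ux uy h s Hu Hs Hhs w Dw). rewrite TW. auto.
      + intro E. apply HWm. rewrite <- TW, <- Tv1, E. reflexivity.
      + intro E. apply HWp. rewrite <- TW, <- Tv2, E. reflexivity.
      + apply onS1_dot. apply (onS1_T ux uy h s Hu Hs Hhs w1 Dw1). rewrite TW1. auto.
      + intro E. apply HW1W. rewrite <- TW, <- TW1, E. reflexivity.
      + change (colE w P w1 = 0). apply (col_iff ux uy h s w P w1 Hu Hhs Hs Dw DP Dw1).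
        rewrite TW, TW1, TP. auto.
      + apply onS1_dot. apply (onS1_T ux uy h s Hu Hs Hhs w2 Dw2). rewrite TW2. auto.
      + intro E. apply HW2W. rewrite <- TW, <- TW2, E. reflexivity.
      + change (colE w Q w2 = 0). apply (col_iff ux uy h s w Q w2 Hu Hhs Hs Dw DQ Dw2).
        rewrite TW, TW2, TQ. auto.
      + change (colE v1 w2 R0 = 0). apply (col_iff ux uy h s v1 w2 R0 Hu Hhs Hs Dv1 Dw2 DR).
        rewrite Tv1, TW2, HTR. auto.
      + change (colE v2 w1 R0 = 0). apply (col_iff ux uy h s v2 w1 R0 Hu Hhs Hs Dv2 Dw1 DR).
        rewrite Tv2, TW1, HTR. auto. }
  assert (A2 : delta_is P Q R0 (/ 2 * DeltaK 1 P Q) <-> Ell).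
  { assert (HP' : in_D P) by (apply inD_dot; auto).
    assert (HQ' : in_D Q) by (apply inD_dot; auto).
    assert (HR' : in_D R0) by (apply inD_dot; auto).
    destruct (dK_G P Q HP' HQ') as [He1 He2].
    set (e := exp (dK P Q)) in *.
    rewrite <- (GG_T ux uy h s Hu Hs Hhs P Q DP DQ ltac:(lra) ltac:(lra)), TP, TQ in He2.
    pose proof (ed_E p q e ltac:(lra) Hpq ltac:(lra) He1 He2) as Ee.
    assert (HE1 : 1 < (1+q)*(1-p)/((1-q)*(1+p))).
    { apply (Rmult_lt_reg_r ((1-q)*(1+p))). nra. field_simplify; nra. }
    set (E := (1+q)*(1-p)/((1-q)*(1+p))) in *.
    assert (He : 1 < e).
    { destruct He1 as [He1|He1]; auto. rewrite <- He1 in Ee. lra. }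
    assert (Hx : / 2 * DeltaK 1 P Q = /2 * ln ((e+1)/(e-1))).
    { unfold DeltaK. replace (INR 1 * dK P Q) with (dK P Q) by (simpl; ring). reflexivity. }
    rewrite Hx.
    destruct (f_phi e He) as [Hf1 Hf2].
    set (x := /2 * ln ((e+1)/(e-1))) in *.
    rewrite Ee in Hf2.
    assert (Hle : forall S, in_D S -> (x <= dK R0 S <-> E/(E-1) <= GG R0 S)).
    { intros S HS. destruct (dK_G R0 S HR' HS) as [g1 g2].
      rewrite exp_le_iff, (phi_le_iff _ _ Hf1 g1), Hf2. unfold phi. rewrite g2.
      split; intro; lra. }
    assert (Heq : forall S, in_D S -> (x = dK R0 S <-> E/(E-1) = GG R0 S)).
    { intros S HS. destruct (dK_G R0 S HR' HS) as [g1 g2]. split; intro H.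
      - assert (phi (exp x) = phi (exp (dK R0 S))) by (rewrite H; auto). unfold phi in H0 at 2.
        rewrite g2 in H0. lra.
      - apply exp_inv. apply phi_eq_iff; auto. unfold phi at 2. rewrite g2. lra. }
    assert (Hch : forall S, on_chord P Q S -> exists sg, sg^2 < 1 /\ GG R0 S = GG (X,Y) (sg,0)).
    { intros S [HS [t Ht]].
      assert (HbS : be ux uy S = h).
      { rewrite Ht. unfold be in *. cbn [fst snd].
        replace (- uy * (fst P + t * (fst Q - fst P)) + ux * (snd P + t * (snd Q - snd P)))
          with ((1-t)*(-uy * fst P + ux * snd P) + t*(-uy * fst Q + ux * snd Q)) by ring.
        rewrite HbP, HbQ. ring. }
      apply inD_dot in HS.
      assert (DS : DD ux uy h S <> 0) by (apply DDn; lra).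
      exists (al ux uy S / s). split.
      - pose proof (proj1 (inD_T ux uy h s Hu Hs Hhs S DS) HS) as H. rewrite Tline in H by auto.
        unfold dot in H; cbn [fst snd] in H. cbn [pow]. lra.
      - rewrite <- (GG_T ux uy h s Hu Hs Hhs R0 S DR DS ltac:(lra) ltac:(lra)), HTR, Tline by auto.
        reflexivity. }
    assert (Hd0 : 1 + h * snd (X,0) <> 0) by (cbn [snd]; lra).
    pose proof (T_Tinv ux uy h s Hu Hs Hhs (X,0) Hd0) as TF.
    assert (DF : DD ux uy h (Tinv ux uy h s (X,0)) <> 0).
    { rewrite (DD_Tinv ux uy h s Hu Hhs (X,0) Hd0). cbn [snd]. 
      apply Rgt_not_eq. apply Rdiv_lt_0_compat; nra. }
    set (F := Tinv ux uy h s (X,0)) in *.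
    assert (HF : on_chord P Q F).
    { split.
      - apply inD_dot. apply (inD_T ux uy h s Hu Hs Hhs F DF). rewrite TF. unfold dot; cbn [fst snd].
        cbn [pow] in HXY. nra.
      - pose proof (recon ux uy P Hu) as EP. pose proof (recon ux uy Q Hu) as EQ.
        rewrite HbP in EP. rewrite HbQ in EQ.
        assert (Hne : al ux uy Q - al ux uy P <> 0).
        { unfold p, q in Hpq. intro Z. assert (al ux uy Q = al ux uy P) by lra. rewrite H in Hpq. lra. }
        exists ((X*s - al ux uy P)/(al ux uy Q - al ux uy P)).
        unfold F, Tinv. cbn [fst snd].
        set (aP := al ux uy P) in *. set (aQ := al ux uy Q) in *. clearbody aP aQ.
        rewrite EP, EQ. cbn [fst snd]. f_equal; field; lra. }
    assert (G0 : GG R0 F = (1-X^2)/(1-X^2-Y^2)).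
    { rewrite <- (GG_T ux uy h s Hu Hs Hhs R0 F DR DF ltac:(lra)), HTR, TF.
      - apply (GG_foot X Y 0); auto. cbn [pow]; lra.
      - destruct HF as [HF _]. apply inD_dot in HF. lra. }
    assert (Gmin : forall S, on_chord P Q S -> GG R0 F <= GG R0 S).
    { intros S HS. destruct (Hch S HS) as [sg [Hsg HG]]. rewrite HG.
      rewrite <- (GG_T ux uy h s Hu Hs Hhs R0 F DR DF ltac:(lra)), HTR, TF.
      - apply (GG_foot X Y sg); auto.
      - destruct HF as [HF _]. apply inD_dot in HF. lra. }
    unfold Ell. rewrite <- (ellK p q X Y ltac:(lra) Hpq ltac:(lra) HXY). fold E. rewrite <- G0.
    assert (HFD : in_D F) by (destruct HF; auto).
    split.
    - intros [[S0 [HS0 HdS0]] Hall].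
      pose proof (proj1 (Hle F HFD) (Hall F HF)).
      assert (HS0D : in_D S0) by (destruct HS0; auto).
      pose proof (proj1 (Heq S0 HS0D) (eq_sym HdS0)).
      pose proof (Gmin S0 HS0). lra.
    - intros H. split.
      + exists F. split; auto. symmetry. apply (Heq F HFD). lra.
      + intros S HS. assert (HSD : in_D S) by (destruct HS; auto). apply (Hle S HSD).
        pose proof (Gmin S HS). lra. }
  tauto.
Qed.
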